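(* Let $G=A_n$ be the alternating group with $n\ge 5$. Then $\kappa(G)=2$.
   Context: The commutator is $[x,y]=xyx^{-1}y^{-1}$. For a finite group $G$ with solvable radical $R(G)$ and $g\in G\setminus R(G)$, $\kappa(g)$ is the smallest $n$ such that there exist $x_1,\dots,x_n\in G$ with $\langle [g,x_1],\dots,[g,x_n]\rangle$ not solvable, and $\kappa(G)=\max_{g\in G\setminus R(G)}\kappa(g)$ (the radical degree of $G$). *)

(* Defs.v *)
From mathcomp Require Import all_boot all_fingroup all_solvable.
Set Implicit Arguments. Unset Strict Implicit. Unset Printing Implicit Defensive.
Local Open Scope group_scope.

(* Commutator with the paper's convention [x,y] = x y x^-1 y^-1
   (MathComp's [~ x, y] is x^-1 y^-1 x y, so we define our own). *)
Definition pcomm (gT : finGroupType) (x y : gT) : gT := x * y * x^-1 * y^-1.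

Definition solv_radical (gT : finGroupType) (G : {set gT}) : {set gT} :=
  << \bigcup_(H : {group gT} | (H <| G) && solvable H) H >>.

Definition kgood (gT : finGroupType) (G : {set gT}) (g : gT) (n : nat) : bool :=
  [exists t : n.-tuple gT,
     all (fun x => x \in G) t &&
     ~~ solvable << [set pcomm g (tnth t i) | i : 'I_n] >>].

Definition is_kappa_elt (gT : finGroupType) (G : {set gT}) (g : gT) (n : nat) : Prop :=
  kgood G g n /\ (forall m, m < n -> ~~ kgood G g m).

Definition is_radical_degree (gT : finGroupType) (G : {set gT}) (k : nat) : Prop :=
  (forall g, g \in G :\: solv_radical G -> exists2 n, is_kappa_elt G g n & n <= k) /\
  (exists2 g, g \in G :\: solv_radical G & is_kappa_elt G g k).

(* Main.v *)
Require Import Defs.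
From mathcomp Require Import all_boot all_fingroup all_solvable.
Set Implicit Arguments. Unset Strict Implicit. Unset Printing Implicit Defensive.
Local Open Scope group_scope.

Section Pext.
Variables (T : finType) (m : nat) (f : 'I_m -> T) (finj : injective f).

Definition pf (p : {perm 'I_m}) (y : T) : T :=
  if [pick i | f i == y] is Some i then f (p i) else y.

Lemma pf_f p i : pf p (f i) = f (p i).
Proof.
rewrite /pf; case: pickP => [j /eqP E | H]; first by rewrite (finj E).
by move: (H i); rewrite eqxx.
Qed.

Lemma pf_out p y : (forall i, f i != y) -> pf p y = y.
Proof. by move=> H; rewrite /pf; case: pickP => // j; rewrite (negbTE (H j)). Qed.

Lemma pf_inj p : injective (pf p).
Proof.
move=> y1 y2; rewrite /pf.
case: pickP => [i1 /eqP <- | H1]; case: pickP => [i2 /eqP <- | H2] //.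
- by move/finj/perm_inj => ->.
- by move=> E; move: (H2 (p i1)); rewrite E eqxx.
- by move=> E; move: (H1 (p i2)); rewrite -E eqxx.
Qed.

Definition pext p : {perm T} := perm (@pf_inj p).

Lemma pextE p y : pext p y = pf p y.
Proof. by rewrite permE. Qed.

Lemma pext_f p i : pext p (f i) = f (p i).
Proof. by rewrite pextE pf_f. Qed.

Lemma pextM : {in setT &, {morph pext : x y / x * y}}.
Proof.
move=> p q _ _; apply/permP => y; rewrite permM !pextE.
case: (pickP (fun i => f i == y)) => [i /eqP Ey | H].
  by rewrite -Ey !pf_f permM.
have H' : forall i, f i != y by move=> i; rewrite H.
by rewrite !(pf_out _ H').
Qed.

Canonical pext_morphism := Morphism pextM.

Lemma pext_inj : 'injm pext_morphism.
Proof.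
apply/injmP => p q _ _ /= E; apply/permP => i.
by apply: finj; rewrite -!pext_f E.
Qed.

Lemma pext_tperm i j : pext (tperm i j) = tperm (f i) (f j).
Proof.
apply/permP => y; rewrite pextE /pf.
case: pickP => [k /eqP <- | H].
  case: (tpermP i j k) => [->|->|/eqP ki /eqP kj]; rewrite ?tpermL ?tpermR //.
  by rewrite tpermD // (inj_eq finj) eq_sym.
by rewrite tpermD // ?H.
Qed.

End Pext.

Lemma pextMT (T : finType) m (f : 'I_m -> T) (finj : injective f) p q :
  pext finj (p * q) = pext finj p * pext finj q.
Proof. by apply: pextM; rewrite inE. Qed.

Definition tstep (ij : nat * nat) (k : nat) : nat :=
  if k == ij.1 then ij.2 else if k == ij.2 then ij.1 else k.
Definition evw (w : seq (nat * nat)) (k : nat) : nat := foldl (fun k ij => tstep ij k) k w.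
Definition wfw (m : nat) (w : seq (nat * nat)) : bool :=
  all (fun ij => (ij.1 < m) && (ij.2 < m)) w.

Section TW.
Variable m : nat.
Definition tw (w : seq (nat * nat)) : {perm 'I_m.+1} :=
  \prod_(ij <- w) tperm (inord ij.1) (inord ij.2).

Lemma tw_cat w1 w2 : tw (w1 ++ w2) = tw w1 * tw w2.
Proof. by rewrite /tw big_cat. Qed.

Lemma tw_rev w : (tw w)^-1 = tw (rev w).
Proof.
elim: w => [|ij w IH]; first by rewrite /tw big_nil invg1.
rewrite /tw big_cons invMg -/(tw w) IH tpermV rev_cons -cats1.
by rewrite big_cat big_seq1.
Qed.

Lemma inord_eq i j : i < m.+1 -> j < m.+1 -> ((inord i : 'I_m.+1) == inord j) = (i == j).
Proof.
move=> Hi Hj; apply/eqP/eqP => [E|->] //.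
by rewrite -(inordK Hi) -(inordK Hj) E.
Qed.

Lemma tw_ev w k : wfw m.+1 w -> k < m.+1 -> tw w (inord k) = inord (evw w k).
Proof.
elim: w k => [|[i j] w IH] k /=; first by rewrite /tw big_nil perm1.
case/andP => /andP [Hi Hj] Hw Hk.
rewrite /tw big_cons permM -/(tw w) /tstep /=.
case: (tpermP (inord i) (inord j) (inord k)).
- move/eqP; rewrite inord_eq // => /eqP ->; rewrite eqxx; exact: IH.
- move/eqP; rewrite inord_eq // => /eqP ->; rewrite eqxx.
  by case: eqP => [->|_]; apply: IH.
- move/eqP; rewrite inord_eq // => /negbTE ->.
  move/eqP; rewrite inord_eq // => /negbTE ->; exact: IH.
Qed.

Lemma tw_eq w1 w2 : wfw m.+1 w1 -> wfw m.+1 w2 ->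
  all (fun k => evw w1 k == evw w2 k) (iota 0 m.+1) -> tw w1 = tw w2.
Proof.
move=> H1 H2 /allP H; apply/permP => x.
have Hx := ltn_ord x.
rewrite -(inord_val x) !tw_ev //.
by rewrite (eqP (H _ _)) // mem_iota.
Qed.
End TW.

Lemma evw_lt m w k : wfw m w -> k < m -> evw w k < m.
Proof.
elim: w k => [|[i j] w IH] k //= /andP [/andP [Hi Hj] Hw] Hk.
apply: IH => //; rewrite /tstep /=; by case: eqP => _ //; case: eqP.
Qed.

Definition gexp (wu wv : seq (nat * nat)) (l : seq nat) : seq (nat * nat) :=
  flatten (map (fun c => nth [::] [:: wu; wv; rev wu; rev wv] c) l).

Definition eqw m w1 w2 := all (fun k => evw w1 k == evw w2 k) (iota 0 m).

Definition cword (a b : seq (nat * nat)) := rev a ++ rev b ++ a ++ b.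

Definition ncheck m wu wv (A1 B1 A2 B2 : seq nat) : bool :=
  [&& wfw m.+1 wu, wfw m.+1 wv, all (fun c => c < 4) (A1 ++ B1 ++ A2 ++ B2),
   has (fun k => evw wu k != k) (iota 0 m.+1),
   eqw m.+1 wu (cword (gexp wu wv A1) (gexp wu wv B1)) &
   eqw m.+1 wv (cword (gexp wu wv A2) (gexp wu wv B2))].

Lemma wfw_cat m w1 w2 : wfw m (w1 ++ w2) = wfw m w1 && wfw m w2.
Proof. by rewrite /wfw all_cat. Qed.
Lemma wfw_rev m w : wfw m (rev w) = wfw m w.
Proof. by rewrite /wfw all_rev. Qed.

Lemma wfw_gexp m wu wv l : wfw m wu -> wfw m wv -> wfw m (gexp wu wv l).
Proof.
move=> Hu Hv; elim: l => [|c l IH] //=.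
rewrite wfw_cat IH andbT.
case: c => [|[|[|[|c]]]] /=; rewrite ?wfw_rev ?nth_nil //.
Qed.

Lemma gexp_mem m wu wv l : all (fun c => c < 4) l ->
  tw m (gexp wu wv l) \in <<[set tw m wu; tw m wv]>>.
Proof.
elim: l => [|c l IH] /=; first by rewrite /tw big_nil group1.
case/andP => Hc Hl; rewrite tw_cat groupM ?IH //.
have Hu : tw m wu \in <<[set tw m wu; tw m wv]>> by rewrite mem_gen // !inE eqxx.
have Hv : tw m wv \in <<[set tw m wu; tw m wv]>> by rewrite mem_gen // !inE eqxx orbT.
by case: c Hc => [|[|[|[|c]]]] //= _; rewrite -?tw_rev ?groupV.
Qed.

Lemma tw_comm m a b : [~ tw m a, tw m b] = tw m (cword a b).
Proof. by rewrite /cword !tw_cat -!tw_rev /commg /conjg !mulgA. Qed.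

Lemma nonsol_gen (gT : finGroupType) (u v a b c d : gT) :
  let K := <<[set u; v]>> in
  u != 1 -> a \in K -> b \in K -> c \in K -> d \in K ->
  u = [~ a, b] -> v = [~ c, d] -> ~~ solvable K.
Proof.
move=> K nu Ha Hb Hc Hd Eu Ev; apply/negP => solK.
have sKK : K \subset [~: K, K].
  rewrite gen_subG; apply/subsetP => x; rewrite !inE => /orP [] /eqP ->.
    by rewrite Eu mem_commg.
  by rewrite Ev mem_commg.
have ntK : K :!=: 1.
  apply/negP => /eqP K1; move: nu; have: u \in K by rewrite mem_gen // !inE eqxx.
  by rewrite K1 inE => ->.
have := sol_der1_proper solK (subxx K) ntK.
by rewrite properE sKK andbF.
Qed.

Lemma ncheck_nonsol m wu wv A1 B1 A2 B2 :
  ncheck m wu wv A1 B1 A2 B2 -> ~~ solvable <<[set tw m wu; tw m wv]>>.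
Proof.
case/and5P => Hu Hv Hl Hne /andP [E1 E2].
move: Hl; rewrite !all_cat => /and4P [H1 H2 H3 H4].
apply: (nonsol_gen (a := tw m (gexp wu wv A1)) (b := tw m (gexp wu wv B1))
                   (c := tw m (gexp wu wv A2)) (d := tw m (gexp wu wv B2)));
  rewrite ?gexp_mem //.
- apply/eqP => E; case/hasP: Hne => k; rewrite mem_iota add0n => /andP [_ Hk].
  have := tw_ev Hu Hk; rewrite E perm1 => /eqP; rewrite inord_eq //.
    by rewrite eq_sym => ->.
  exact: evw_lt.
- rewrite tw_comm; apply: tw_eq => //.
  by rewrite /cword !wfw_cat !wfw_rev !wfw_gexp.
- rewrite tw_comm; apply: tw_eq => //.
  by rewrite /cword !wfw_cat !wfw_rev !wfw_gexp.
Qed.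

Definition psi (phil : seq (nat * nat)) (i : nat) : nat :=
  nth i (map snd phil) (index i (map fst phil)).

Lemma psi_mem phil i : i \in map fst phil -> (i, psi phil i) \in phil.
Proof.
move=> Hi; set k := index i (map fst phil).
have Hk : k < size phil by rewrite -(size_map fst) index_mem.
have -> : (i, psi phil i) = nth (i, i) phil k.
  rewrite /psi -/k (nth_map (i, i)) //.
  have E : (nth (i, i) phil k).1 = i.
    by rewrite -(nth_map (i, i) i fst Hk) nth_index.
  by rewrite -[in X in (X, _)]E; case: (nth _ _ _).
exact: mem_nth.
Qed.

Definition mapw phil (w : seq (nat * nat)) := map (fun ij => (psi phil ij.1, psi phil ij.2)) w.
Definition wuof phil w := mapw phil w ++ rev w.

Definition xok m phil (w : seq (nat * nat)) : bool :=
  [&& wfw m.+1 w, ~~ odd (size w), all (fun ij => ij.1 != ij.2) w,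
      all (fun ij => (ij.1 \in map fst phil) && (ij.2 \in map fst phil)) w &
      wfw m.+1 (mapw phil w)].

Definition fcheck m phil wx1 wx2 A1 B1 A2 B2 : bool :=
  [&& xok m phil wx1, xok m phil wx2 & ncheck m (wuof phil wx1) (wuof phil wx2) A1 B1 A2 B2].

Section Final.
Variables (n : nat) (m : nat) (s : seq 'I_n) (x0 : 'I_n).
Hypotheses (Us : uniq s) (Hs : size s = m.+1).

Definition fs (i : 'I_m.+1) : 'I_n := nth x0 s i.
Lemma fs_inj : injective fs.
Proof.
move=> i j /eqP; rewrite /fs nth_uniq ?Hs // => /eqP E; exact: val_inj.
Qed.

Notation P := (pext fs_inj).

Lemma P_tperm i j : i < m.+1 -> j < m.+1 ->
  P (tperm (inord i) (inord j)) = tperm (nth x0 s i) (nth x0 s j).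
Proof. by move=> Hi Hj; rewrite pext_tperm /fs !inordK. Qed.

Lemma P_conj (phi : {perm 'I_n}) phil w :
  (forall ij, ij \in phil -> phi (nth x0 s ij.1) = nth x0 s ij.2) ->
  wfw m.+1 w -> wfw m.+1 (mapw phil w) ->
  all (fun ij => (ij.1 \in map fst phil) && (ij.2 \in map fst phil)) w ->
  (P (tw m w)) ^ phi = P (tw m (mapw phil w)).
Proof.
move=> Hphi; elim: w => [|[i j] w IH] /=.
  by rewrite /tw !big_nil morph1 conj1g.
case/andP => /andP [Hi Hj] Hw /andP [/andP [Hi' Hj'] Hw'] /andP [/andP [Di Dj] Dw].
rewrite /tw !big_cons -!/(tw _ _) !pextMT conjMg IH // !P_tperm // tpermJ.
by rewrite (Hphi _ (psi_mem Di)) (Hphi _ (psi_mem Dj)).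
Qed.

Lemma odd_P w : wfw m.+1 w -> all (fun ij => ij.1 != ij.2) w ->
  odd_perm (P (tw m w)) = odd (size w).
Proof.
elim: w => [|[i j] w IH] /=; first by rewrite /tw big_nil morph1 odd_perm1.
case/andP => /andP [Hi Hj] Hw /andP [Dij Dw].
rewrite /tw big_cons -/(tw _ _) pextMT odd_permM IH // P_tperm // odd_tperm.
by rewrite nth_uniq ?Hs // Dij.
Qed.

Lemma main_finish (g : {perm 'I_n}) phil wx1 wx2 A1 B1 A2 B2 :
  (forall ij, ij \in phil -> (g^-1)%g (nth x0 s ij.1) = nth x0 s ij.2) ->
  fcheck m phil wx1 wx2 A1 B1 A2 B2 ->
  kgood ('Alt_('I_n)) g 2.
Proof.
move=> Hphi /and3P [X1 X2 NC].
have Hc : forall wx, xok m phil wx ->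
   pcomm g (P (tw m wx)) = P (tw m (wuof phil wx)) /\ P (tw m wx) \in 'Alt_('I_n).
  move=> wx /and5P [W E D Dm Wm]; split.
    rewrite /pcomm /wuof tw_cat pextMT -(P_conj Hphi) // -tw_rev morphV ?inE //.
    by rewrite /conjg invgK !mulgA.
  by rewrite Alt_even odd_P.
have [E1 A1'] := Hc _ X1; have [E2 A2'] := Hc _ X2.
apply/existsP; exists [tuple P (tw m wx1); P (tw m wx2)].
rewrite /= A1' A2' /=.
have -> : [set pcomm g (tnth [tuple P (tw m wx1); P (tw m wx2)] i) | i : 'I_2] =
          [set P (tw m (wuof phil wx1)); P (tw m (wuof phil wx2))].
  apply/setP => y; rewrite !inE; apply/imsetP/orP.
    case=> i _ ->; case: i => -[|[|k]] Hk //=.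
      by left; rewrite (_ : tnth _ _ = P (tw m wx1)) ?E1 //.
    by right; rewrite (_ : tnth _ _ = P (tw m wx2)) ?E2 //.
  by case=> /eqP ->; [exists ord0 | exists (lift ord0 ord0)] => //=; rewrite ?E1 ?E2.
apply/negP => solH.
have NS := ncheck_nonsol NC.
move: NS; rewrite -(injm_sol (pext_inj fs_inj)) ?subsetT // => /negP; apply.
apply: solvableS solH.
suff S : (pext_morphism fs_inj @* <<[set tw m (wuof phil wx1); tw m (wuof phil wx2)]>>)
   \subset <<[set P (tw m (wuof phil wx1)); P (tw m (wuof phil wx2))]>> by exact: S.
rewrite morphim_gen ?subsetT //.
by apply: genS; rewrite morphimU !morphim_set1 ?inE.
Qed.
End Final.
Lemma nphi (T : finType) (phi : {perm T}) x y x' y' :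
  phi x = y -> phi x' = y' -> x != x' -> y != y'.
Proof. by move=> <- <-; rewrite (inj_eq perm_inj). Qed.

Lemma fresh_pt n (s : seq 'I_n) : size s < n -> exists e, e \notin s.
Proof.
move=> Hs; case: (pickP (fun e => e \notin s)) => [e He | H]; first by exists e.
have : #|'I_n| <= #|s|.
  apply: subset_leq_card; apply/subsetP => x _; move: (H x) => /= /negbFE.
  by [].
by rewrite card_ord => /leq_trans /(_ (card_size s)); rewrite leqNgt Hs.
Qed.

Lemma all_phil (P : nat * nat -> Prop) (l : seq (nat * nat)) :
  foldr (fun ij acc => P ij /\ acc) True l -> forall ij, ij \in l -> P ij.
Proof.
elim: l => [|ij l IH] //= [H1 H2] ij'; rewrite inE => /orP [/eqP -> // | ].
exact: IH.
Qed.

Lemma odd_invol (T : finType) (l : seq (T * T)) (phi : {perm T}) :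
  uniq (flatten [seq [:: p.1; p.2] | p <- l]) ->
  (forall p, p \in l -> phi p.1 = p.2 /\ phi p.2 = p.1) ->
  (forall z, z \notin flatten [seq [:: p.1; p.2] | p <- l] -> phi z = z) ->
  odd_perm phi = odd (size l).
Proof.
elim: l phi => [|[x y] l IH] phi /= U Hp Hz.
  have -> : phi = 1 by apply/permP => z; rewrite perm1 Hz.
  by rewrite odd_perm1.
move: U; rewrite !inE negb_or => /and3P [/andP [nxy nxl] nyl Ul].
have mem : forall p, p \in l -> (p.1 \in flatten [seq [:: p.1; p.2] | p <- l]) /\
                                (p.2 \in flatten [seq [:: p.1; p.2] | p <- l]).
  move=> p Hpl; split; apply/flattenP; exists [:: p.1; p.2];
    rewrite ?(map_f (fun p : T * T => [:: p.1; p.2])) // !inE eqxx ?orbT //.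
have [Ex Ey] := Hp (x, y) (mem_head _ _).
have -> : phi = (phi * tperm x y) * tperm x y by rewrite -mulgA tperm2 mulg1.
rewrite odd_permM odd_tperm nxy (IH (phi * tperm x y)) //.
- by rewrite addbT.
- move=> p Hpl; have [H1 H2] := mem p Hpl.
  have [E1 E2] : phi p.1 = p.2 /\ phi p.2 = p.1 by apply: Hp; rewrite inE Hpl orbT.
  rewrite !permM E1 E2; split; apply: tpermD; apply/eqP => E;
    by move: nxl nyl; rewrite E ?H1 ?H2.
- move=> z Hzl; rewrite permM.
  case: (eqVneq z x) => [->|nzx]; first by rewrite Ex tpermR.
  case: (eqVneq z y) => [->|nzy]; first by rewrite Ey tpermL.
  rewrite Hz ?tpermD // 1?eq_sym //.
  by rewrite inE negb_or nzx inE negb_or nzy.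
Qed.

Ltac uniq_tac := rewrite /= !inE ?negb_or; repeat (apply/andP; split); try done; by rewrite eq_sym.

Ltac solve_side := match goal with
 | |- is_true (fcheck _ _ _ _ _ _ _ _) => vm_compute; reflexivity
 | |- is_true (uniq _) => uniq_tac
 | |- forall ij, _ => apply: all_phil => /=; by repeat split
 | |- _ => by []
 end.

Lemma core n (hn : 5 <= n) (g : {perm 'I_n}) :
  g \in 'Alt_('I_n) -> g != 1 -> kgood ('Alt_('I_n)) g 2.
Proof.
move=> gA g1.
have phiE : ~~ odd_perm (g^-1) by rewrite odd_permV -Alt_even.
have phi1 : g^-1 != 1.
  by apply: contra g1 => /eqP E; rewrite -[g]invgK E invg1.
have [a0 Ha0] : exists a, (g^-1) a != a.
  case: (pickP (fun a => (g^-1) a != a)) => [a Ha | H]; first by exists a.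
  by case/eqP: phi1; apply/permP => x; rewrite perm1; move/negbFE/eqP: (H x).
case: (pickP (fun a => ((g^-1) a != a) && ((g^-1) ((g^-1) a) != a))) => [a /andP [Hab Hba] | Hinv].
-
  clear a0 Ha0.
  move Eb: ((g^-1) a) => b in Hab Hba *.
  move Ec: ((g^-1) b) => c in Hba *.
  have nab : a != b by rewrite eq_sym.
  have nac : a != c by rewrite eq_sym.
  have nbc : b != c by apply: (nphi Eb Ec).
  move Ed: ((g^-1) c) => d.
  case: (eqVneq d a) => [da | nda].
  + rewrite da in Ed.
    have [e] := fresh_pt (s := [:: a; b; c]) (leq_trans (isT : 4 <= 5) hn).
    rewrite !inE !negb_or => /and3P [nea neb nec].
    move Ef: ((g^-1) e) => f.
    have nfb : f != b := nphi Ef Eb nea.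
    have nfc : f != c := nphi Ef Ec neb.
    have nfa : f != a := nphi Ef Ed nec.
    case: (eqVneq f e) => [fe | nfe].
    * rewrite fe in Ef.
      have [h] := fresh_pt (s := [:: a; b; c; e]) hn.
      rewrite !inE !negb_or => /and4P [nha nhb nhc nhe].
      move Ek: ((g^-1) h) => k.
      have nkb : k != b := nphi Ek Eb nha.
      have nkc : k != c := nphi Ek Ec nhb.
      have nka : k != a := nphi Ek Ed nhc.
      have nke : k != e := nphi Ek Ef nhe.
      case: (eqVneq k h) => [kh | nkh].
      -- rewrite kh in Ek. abstract (apply: (@main_finish _ 4 [:: a; b; c; e; h] a _ _ g ([:: (0,1); (1,2); (3,3); (4,4)]%N) ([:: (0,1); (0,3)]%N) ([:: (0,3); (0,4)]%N) ([:: 1; 0; 1; 0; 3]%N) ([:: 3; 0; 3; 0; 1]%N) ([:: 1; 0]%N) ([:: 3; 0; 1; 0; 3; 0]%N)); solve_side).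
      -- abstract (apply: (@main_finish _ 5 [:: a; b; c; e; h; k] a _ _ g ([:: (0,1); (1,2); (3,3); (4,5)]%N) ([:: (0,1); (0,3)]%N) ([:: (0,1); (0,4)]%N) ([:: 3; 3; 0; 3]%N) ([:: 1; 1; 0; 1]%N) ([:: 1; 0; 1]%N) ([:: 0; 3; 0]%N)); solve_side).
    * abstract (apply: (@main_finish _ 4 [:: a; b; c; e; f] a _ _ g ([:: (0,1); (1,2); (3,4)]%N) ([:: (0,1); (0,3)]%N) ([:: (0,1); (1,3)]%N) ([:: 2; 1]%N) ([:: 1]%N) ([:: 2]%N) ([:: 1; 2]%N)); solve_side).
  + have ndb : d != b := nphi Ed Eb Hba.
    have ndc : d != c by apply: (nphi Ed Ec); rewrite eq_sym.
    have [e] := fresh_pt (s := [:: a; b; c; d]) hn.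
    rewrite !inE !negb_or => /and4P [nea neb nec ned].
    move Ef: ((g^-1) e) => f.
    have nfb : f != b := nphi Ef Eb nea.
    have nfc : f != c := nphi Ef Ec neb.
    have nfd : f != d := nphi Ef Ed nec.
    case: (eqVneq f e) => [fe | nfe].
    * rewrite fe in Ef. abstract (apply: (@main_finish _ 4 [:: a; b; c; d; e] a _ _ g ([:: (0,1); (1,2); (2,3); (4,4)]%N) ([:: (0,1); (0,2)]%N) ([:: (0,1); (0,4)]%N) ([:: 0; 1; 0; 1; 2; 1]%N) ([:: 2; 1]%N) ([:: 0; 1; 0; 1; 2]%N) ([:: 2; 1; 2; 1; 0]%N)); solve_side).
    case: (eqVneq f a) => [fa | nfa].
    * rewrite fa in Ef. abstract (apply: (@main_finish _ 4 [:: a; b; c; d; e] a _ _ g ([:: (0,1); (1,2); (2,3); (4,0)]%N) ([:: (0,1); (0,2)]%N) ([:: (0,1); (0,4)]%N) ([:: 1; 2; 3; 0; 1]%N) ([:: 2]%N) ([:: 0; 1; 2; 3; 0]%N) ([:: 3]%N)); solve_side).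
    * abstract (apply: (@main_finish _ 5 [:: a; b; c; d; e; f] a _ _ g ([:: (0,1); (1,2); (2,3); (4,5)]%N) ([:: (0,1); (0,2)]%N) ([:: (0,1); (0,4)]%N) ([:: 3; 0; 1; 0; 1; 1]%N) ([:: 2]%N) ([:: 1; 2; 3; 2]%N) ([:: 3; 0; 1; 0]%N)); solve_side).
-
  have inv : forall x, (g^-1) x != x -> (g^-1) ((g^-1) x) = x.
    by move=> x Hx; move: (Hinv x); rewrite Hx /= => /negbFE/eqP.
  set a := a0.
  have Eba := inv a Ha0.
  move Eb: ((g^-1) a) => b in Ha0 Eba *.
  have nab : a != b by rewrite eq_sym.
  case: (pickP (fun d => [&& d != a, d != b & (g^-1) d != d])) => [d /and3P [nda ndb Hd] | Hno]; last first.
    exfalso; move: phiE.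
    rewrite (@odd_invol _ [:: (a, b)]) //.
    + by uniq_tac.
    + by move=> pr; rewrite inE => /eqP -> /=.
    + move=> z; rewrite !inE negb_or => /andP [nza nzb].
      by move: (Hno z); rewrite nza nzb /= => /negbFE/eqP.
  have Ede := inv d Hd.
  move Ee: ((g^-1) d) => e in Hd Ede *.
  have nea : e != a := nphi Ee Eba ndb.
  have neb : e != b := nphi Ee Eb nda.
  have nde : d != e by rewrite eq_sym.
  have [h] := fresh_pt (s := [:: a; b; d; e]) hn.
  rewrite !inE !negb_or => /and4P [nha nhb nhd nhe].
  case: (eqVneq ((g^-1) h) h) => [Hh | Hh].
    abstract (apply: (@main_finish _ 4 [:: a; b; d; e; h] a _ _ g ([:: (0,1); (1,0); (2,3); (4,4)]%N) ([:: (0,1); (0,2)]%N) ([:: (0,1); (0,4)]%N) ([:: 1; 0; 1; 0; 3]%N) ([:: 3; 0; 3; 0; 1]%N) ([:: 1; 0; 3; 0; 1; 0]%N) ([:: 3; 0]%N)); solve_side).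
  have Ekh := inv h Hh.
  move Ek: ((g^-1) h) => k in Hh Ekh *.
  have nkb : k != b := nphi Ek Eb nha.
  have nka : k != a := nphi Ek Eba nhb.
  have nke : k != e := nphi Ek Ee nhd.
  have nkd : k != d := nphi Ek Ede nhe.
  have nhk : h != k by rewrite eq_sym.
  case: (pickP (fun p => (p \notin [:: a; b; d; e; h; k]) && ((g^-1) p != p))) => [p /andP [Hp Hpp] | Hno]; last first.
    exfalso; move: phiE.
    rewrite (@odd_invol _ [:: (a, b); (d, e); (h, k)]) //.
    + by uniq_tac.
    + by move=> pr; rewrite !inE => /or3P [] /eqP -> /=.
    + move=> z Hz; move: (Hno z); rewrite Hz /= => /negbFE/eqP.
      by [].
  move: Hp; rewrite !inE !negb_or => /and5P [npa npb npd npe /andP [nph npk]].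
  have Eqp := inv p Hpp.
  move Eq: ((g^-1) p) => q in Hpp Eqp *.
  have nqa : q != a := nphi Eq Eba npb.
  have nqb : q != b := nphi Eq Eb npa.
  have nqd : q != d := nphi Eq Ede npe.
  have nqe : q != e := nphi Eq Ee npd.
  have nqh : q != h := nphi Eq Ekh npk.
  have nqk : q != k := nphi Eq Ek nph.
  abstract (apply: (@main_finish _ 7 [:: a; b; d; e; h; k; p; q] a _ _ g ([:: (0,1); (2,3); (3,2); (4,5); (6,7)]%N) ([:: (0,2); (0,4)]%N) ([:: (0,3); (0,6)]%N) ([:: 3; 0]%N) ([:: 1; 0; 1; 2; 3]%N) ([:: 0; 1; 2; 3; 2]%N) ([:: 2; 3]%N)); solve_side).
Qed.

Lemma not_kgood_small (gT : finGroupType) (G : {set gT}) (g : gT) m :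
  m < 2 -> ~~ kgood G g m.
Proof.
move=> Hm; apply/existsP => [[t /andP [_ H]]]; move: H; apply/negP/negPn.
case: m Hm t => [|[|//]] _ t.
  have -> : [set pcomm g (tnth t i) | i : 'I_0] = set0.
    by apply/setP => x; rewrite inE; apply/imsetP => [[[]]].
  by rewrite gen0 solvable1.
have -> : [set pcomm g (tnth t i) | i : 'I_1] = [set pcomm g (tnth t ord0)].
  apply/setP => x; rewrite inE; apply/imsetP/eqP => [[i _ ->]|->].
    by rewrite (ord1 i).
  by exists ord0.
exact: abelian_sol (cycle_abelian _).
Qed.

Theorem proposition3p1 (n : nat) (hn : 5 <= n) :
  is_radical_degree ('Alt_('I_n))%g 2.
Proof.
have kap : forall g, g \in 'Alt_('I_n) -> g != 1 -> is_kappa_elt ('Alt_('I_n)) g 2.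
  move=> g gA g1; split; first exact: core.
  by move=> m Hm; apply: not_kgood_small.
have Hn2 : 2 < n by apply: leq_trans hn.
pose i0 := Ordinal (ltn_trans (isT : 0 < 2) Hn2).
pose i1 := Ordinal (ltn_trans (isT : 1 < 2) Hn2).
pose i2 := Ordinal Hn2.
pose g3 : {perm 'I_n} := tperm i0 i1 * tperm i0 i2.
have g3A : g3 \in 'Alt_('I_n) by rewrite Alt_even odd_permM !odd_tperm.
have g31 : g3 != 1.
  apply/eqP => /permP /(_ i0); rewrite perm1 permM tpermL tpermD //.
have nsolG : ~~ solvable ('Alt_('I_n)).
  have := core hn g3A g31; case/existsP => t /andP [At NS].
  apply: contra NS => solG; apply: solvableS solG.
  rewrite gen_subG; apply/subsetP => x /imsetP [i _ ->].
  have Ht : tnth t i \in 'Alt_('I_n) by apply: (allP At); apply: mem_tnth.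
  rewrite /pcomm; apply: groupM; [apply: groupM; [apply: groupM |] |]; by rewrite ?groupV.
have R1 : solv_radical ('Alt_('I_n)) = 1.
  apply/eqP; rewrite eqEsubset sub1G andbT /solv_radical gen_subG.
  apply/bigcupsP => H /andP [nH solH].
  have : simple ('Alt_('I_n)) by apply: simple_Alt5; rewrite card_ord.
  case/simpleP => _ /(_ H nH) [-> // | EH].
  by move: nsolG; rewrite -EH solH.
split.
  move=> g; rewrite R1 in_setD in_set1 => /andP [g1 gA].
  by exists 2 => //; apply: kap.
exists g3; first by rewrite R1 in_setD in_set1 g31 g3A.
exact: kap.
Qed.
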